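(* As $k$ ranges over $\mathbb{Z}$, the Eells–Kuiper invariant $\mu(Q^{15}_k)$, regarded as the (unordered) pair of values $\frac{k(k+1)}{2^{8}\cdot127}\pm\frac{2k+1}{2^{9}}\mod 1$ corresponding to the two spin structures of $Q^{15}_k$, takes exactly 4096 different pairs of values.
   Context: $Q^{15}_k=M^{15}_k/\tau$ is the Shimada projective space: $M^{15}_k$ is the Shimada sphere $D^8\times S^7\sqcup D^8\times S^7/\sim$ glued along $S^7\times S^7$ via $f(x)(y)=x^{k+1}yx^{-k}$ (octonion multiplication), and $\tau$ is the free involution induced by $(x,y)\mapsto(x,-y)$. Its Eells–Kuiper invariant for its two spin structures is $\frac{k(k+1)}{2^8\cdot127}\pm\frac{2k+1}{2^9}\mod1$. *)

(* Defs.v *)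
From HB Require Import structures.
From mathcomp Require Import all_boot all_order all_algebra.
From mathcomp Require Import finmap.
Set Implicit Arguments. Unset Strict Implicit. Unset Printing Implicit Defensive.
Import Order.TTheory GRing.Theory Num.Theory.
Local Open Scope ring_scope.
Local Open Scope fset_scope.

Definition mod1 (x : rat) : rat := x - (Num.floor x)%:~R.

Definition EK_a (k : int) : rat := (k * (k + 1))%:~R / (2 ^+ 8 * 127)%:R.
Definition EK_b (k : int) : rat := (2 * k + 1)%:~R / (2 ^+ 9)%:R.

Definition EK_pair (k : int) : {fset rat} :=
  [fset mod1 (EK_a k + EK_b k); mod1 (EK_a k - EK_b k)].

(* Main.v *)
Require Import Defs.
From HB Require Import structures.
From mathcomp Require Import all_boot all_order all_algebra.
From mathcomp Require Import finmap.
From Stdlib Require Import ZArith.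
From mathcomp Require Import zify ring lra.
From mathcomp Require Import ssrZ.
Import ssrZ.Instances.Exports.

Definition DZ : Z := 65024%Z.
Definition NZ : Z := 32512%Z.
Definition FpZ (z : Z) : Z := Z.modulo (2*z*z + 256*z + 127)%Z DZ.
Definition FmZ (z : Z) : Z := Z.modulo (2*z*z - 252*z - 127)%Z DZ.
Definition keyZ (z : Z) : Z * Z := (Z.min (FpZ z) (FmZ z), Z.max (FpZ z) (FmZ z)).
Definition idx (z : Z) : Z :=
  let J := if Z.even z then (z + 64)%Z else (63 - z)%Z in
  let r := Z.modulo J 127 in
  (Z.min r (127 - r) * 64 + Z.modulo J 128 / 2)%Z.
Definition rep (i : Z) : Z := (Z.modulo (128 * (i / 64) - 254 * (Z.modulo i 64)) 16256 - 64)%Z.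
Fixpoint zseq (z : Z) (n : nat) : seq Z :=
  match n with O => [::] | S n' => z :: zseq (z + 1)%Z n' end.
Fixpoint check_from (P : Z -> bool) (n : nat) (z : Z) : bool :=
  match n with O => true | S n' => P z && check_from P n' (z + 1)%Z end.
Definition Pcov (r : Z) : bool :=
  (0 <=? idx r)%Z && (idx r <? 4096)%Z && (keyZ (rep (idx r)) == keyZ r).
Lemma cov_ok : check_from Pcov 32512 0%Z = true.
Proof. vm_compute. reflexivity. Qed.
Lemma uniq_ok : uniq [seq keyZ (rep i) | i <- zseq 0 4096].
Proof. vm_compute. reflexivity. Qed.


Import Order.TTheory GRing.Theory Num.Theory.
Local Open Scope ring_scope.
Definition Dint : int := 2 ^+ 9 * 127.
Lemma DintZ : Z_of_int Dint = DZ.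
Proof. by rewrite /Dint rmorphM rmorphXn. Qed.
Lemma modZgen (n d : int) : 0 < d -> Z_of_int (modz n d) = Z.modulo (Z_of_int n) (Z_of_int d).
Proof.
move=> dpos.
have h1 := divz_eq n d.
have h2 : 0 <= modz n d by rewrite modz_ge0 // gt_eqF.
have h3 : modz n d < d by rewrite ltz_pmod.
apply: (Z.mod_unique _ _ (Z_of_int (divz n d))).
  left; split; lia.
rewrite {1}h1 rmorphD rmorphM /=; lia.
Qed.
Lemma modZE (n : int) : Z_of_int (modz n Dint) = Z.modulo (Z_of_int n) DZ.
Proof. by rewrite modZgen // DintZ. Qed.
Definition Pp (k : int) : int := 2 * k ^+ 2 + 256 * k + 127.
Definition Pm (k : int) : int := 2 * k ^+ 2 - 252 * k - 127.
Lemma PpZ0 k : Z_of_int (Pp k) = (2 * Z_of_int k * Z_of_int k + 256 * Z_of_int k + 127)%Z.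
Proof. rewrite /Pp expr2. lia. Qed.
Lemma PmZ0 k : Z_of_int (Pm k) = (2 * Z_of_int k * Z_of_int k - 252 * Z_of_int k - 127)%Z.
Proof. rewrite /Pm expr2. lia. Qed.
Lemma PpZ k : Z_of_int (modz (Pp k) Dint) = FpZ (Z_of_int k).
Proof. by rewrite modZE PpZ0. Qed.
Lemma PmZ k : Z_of_int (modz (Pm k) Dint) = FmZ (Z_of_int k).
Proof. by rewrite modZE PmZ0. Qed.

Lemma EKp k : EK_a k + EK_b k = (Pp k)%:~R / Dint%:~R.
Proof.
rewrite /EK_a /EK_b /Pp /Dint.
rewrite !(intrD, intrM, natrM, natrX, rmorphXn) /=.
by field.
Qed.
Lemma EKm k : EK_a k - EK_b k = (Pm k)%:~R / Dint%:~R.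
Proof.
have E : EK_a k - EK_b k = (EK_a k + EK_b k) - 2 * EK_b k by ring.
have E2 : Pm k = Pp k - 254 * (2 * k + 1) by rewrite /Pm /Pp; ring.
rewrite E EKp /EK_b E2 intrB intrM /Dint intrM rmorphXn.
by field.
Qed.

Lemma mod1E (n d : int) : 0 < d -> mod1 (n%:~R / d%:~R) = (modz n d)%:~R / d%:~R.
Proof.
move=> dpos.
have h1 := divz_eq n d.
have h2 : 0 <= modz n d by rewrite modz_ge0 // gt_eqF.
have h3 : modz n d < d by rewrite ltz_pmod.
have dR : (0 : rat) < d%:~R by rewrite ltr0z.
have dn : (d%:~R : rat) != 0 by rewrite gt_eqF.
have E : (n%:~R / d%:~R : rat) = (divz n d)%:~R + (modz n d)%:~R / d%:~R.
  by rewrite {1}h1 intrD intrM; field.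
have r0 : (0 : rat) <= (modz n d)%:~R / d%:~R by rewrite divr_ge0 // ?ler0z // ltW.
have r1 : ((modz n d)%:~R / d%:~R : rat) < 1 by rewrite ltr_pdivrMr // mul1r ltr_int.
have F : Num.floor (n%:~R / d%:~R : rat) = divz n d.
  apply: floor_def; rewrite E intrD; apply/andP; split; lra.
rewrite /mod1 F E; ring.
Qed.

Local Open Scope fset_scope.
Definition cc (n : int) : rat := n%:~R / Dint%:~R.
Lemma cc_inj : injective cc.
Proof.
move=> x y; rewrite /cc => /(congr1 (fun t => t * Dint%:~R)).
rewrite !divfK ?intr_eq0 // => /eqP; rewrite eqr_int => /eqP //.
Qed.

Lemma EK_pairE k : EK_pair k = [fset cc (modz (Pp k) Dint); cc (modz (Pm k) Dint)].
Proof. by rewrite /EK_pair EKp EKm !mod1E. Qed.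

Lemma pair_gen (A B C E : int) :
  (Z.min (Z_of_int A) (Z_of_int B), Z.max (Z_of_int A) (Z_of_int B)) =
  (Z.min (Z_of_int C) (Z_of_int E), Z.max (Z_of_int C) (Z_of_int E)) <->
  [fset cc A; cc B] = [fset cc C; cc E].
Proof.
split.
  case=> h1 h2.
  have : (A = C /\ B = E) \/ (A = E /\ B = C) by lia.
  case=> [[-> ->]|[-> ->]] //.
  by apply/fsetP => x; rewrite !inE orbC.
move=> H.
have hA : cc A \in [fset cc C; cc E] by rewrite -H !inE eqxx.
have hB : cc B \in [fset cc C; cc E] by rewrite -H !inE eqxx orbT.
have hC : cc C \in [fset cc A; cc B] by rewrite H !inE eqxx.
have hE : cc E \in [fset cc A; cc B] by rewrite H !inE eqxx orbT.
move: hA hB hC hE; rewrite !inE !(eqtype.inj_eq cc_inj).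
move=> /orP[/eqP a|/eqP a] /orP[/eqP b|/eqP b] /orP[/eqP c|/eqP c] /orP[/eqP e|/eqP e];
  subst; congr pair; lia.
Qed.

Lemma pair_key k l : keyZ (Z_of_int k) = keyZ (Z_of_int l) <-> EK_pair k = EK_pair l.
Proof. by rewrite !EK_pairE /keyZ -!PpZ -!PmZ pair_gen. Qed.

Lemma FpZ_per z : FpZ z = FpZ (Z.modulo z NZ).
Proof.
rewrite /FpZ.
set q := (z / NZ)%Z; set r := (z mod NZ)%Z.
have E : z = (NZ * q + r)%Z by apply: Z.div_mod.
rewrite (_ : (2 * z * z + 256 * z + 127 =
   (2 * r * r + 256 * r + 127) + (NZ * q * q + 2 * q * r + 128 * q) * DZ)%Z);
  last by rewrite {1 2 3}E /NZ /DZ; ring.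
by rewrite Z.mod_add.
Qed.
Lemma FmZ_per z : FmZ z = FmZ (Z.modulo z NZ).
Proof.
rewrite /FmZ.
set q := (z / NZ)%Z; set r := (z mod NZ)%Z.
have E : z = (NZ * q + r)%Z by apply: Z.div_mod.
rewrite (_ : (2 * z * z - 252 * z - 127 =
   (2 * r * r - 252 * r - 127) + (NZ * q * q + 2 * q * r - 126 * q) * DZ)%Z);
  last by rewrite {1 2 3}E /NZ /DZ; ring.
by rewrite Z.mod_add.
Qed.
Lemma keyZ_per z : keyZ z = keyZ (Z.modulo z NZ).
Proof. by rewrite /keyZ FpZ_per FmZ_per. Qed.

Lemma check_fromP P n z : check_from P n z = true ->
  forall w, (z <= w < z + Z.of_nat n)%Z -> P w = true.
Proof.
elim: n z => [|n IH] z /=; first by move=> _ w; lia.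
move=> /andP[Pz Hr] w hw.
have [->|ne] := Z.eq_dec w z; first by [].
apply: (IH _ Hr); lia.
Qed.

Lemma mem_zseq z n w : (z <= w < z + Z.of_nat n)%Z -> w \in zseq z n.
Proof.
elim: n z => [|n IH] z /=; first lia.
move=> hw; rewrite in_cons.
have [->|ne] := Z.eq_dec w z; first by rewrite eqxx.
apply/orP; right; apply: IH; lia.
Qed.

Lemma size_zseq z n : size (zseq z n) = n.
Proof. by elim: n z => [|n IH] z //=; rewrite IH. Qed.

Lemma uniq_map_from (T U V : eqType) (f : T -> U) (g : T -> V) (s : seq T) :
  (forall x y, f x = f y -> g x = g y) -> uniq (map g s) -> uniq (map f s).
Proof.
move=> H; elim: s => [|x s IH] //= /andP[ng ug].
apply/andP; split; last exact: IH.
apply/negP => /mapP[y ys fy]; apply: (negP ng); apply/mapP; exists y => //.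
exact: H.
Qed.

Delimit Scope nat_scope with N.
Theorem proposition4p9 :
  exists S : seq {fset rat},
    [/\ uniq S, size S = 4096%N &
        forall P : {fset rat}, P \in S <-> exists k : int, P = EK_pair k].
Proof.
exists [seq EK_pair (int_of_Z (rep i)) | i <- zseq 0 4096].
split.
- apply: (@uniq_map_from _ _ _ _ (fun i => keyZ (rep i))); last exact: uniq_ok.
  by move=> x y /pair_key; rewrite !int_of_ZK.
- by rewrite size_map size_zseq.
- move=> P; split.
    by case/mapP => i _ ->; eexists.
  case=> k ->.
  set z := Z_of_int k.
  have hr : (0 <= Z.modulo z NZ < NZ)%Z by apply: Z.mod_pos_bound.
  have := @check_fromP _ _ _ cov_ok (Z.modulo z NZ).
  have e : Z.of_nat 32512 = NZ by reflexivity.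
  rewrite /Pcov e => /(_ ltac:(lia)).
  move=> /andP[/andP[/Z.leb_le i0 /Z.ltb_lt i1] /eqP hk].
  apply/mapP; exists (idx (Z.modulo z NZ)).
    by apply: mem_zseq; lia.
  by apply/pair_key; rewrite int_of_ZK hk -keyZ_per.
Qed.
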